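(* Let $k$ be a positive integer and let $G=(V,E)$ be a finite, simple, connected graph on $n=n(G)$ vertices with minimum degree $\delta$ and maximum degree $\Delta\ge k+1$. (i) If $\delta<\Delta=k+1$, then $F_k(G)=1$. (ii) If $\delta=\Delta=k+1$, then $F_k(G)=2$. (iii) If $\Delta\ge k+2$, then \[ F_k(G)\le \frac{(\Delta-k-1)\,n+\max\{\delta(k+1-\Delta)+k,\ k(\delta-\Delta+2)\}}{\Delta-1}. \]
   Context: All graphs are finite, simple and undirected. For a positive integer $k$, a set $S\subseteq V$ is a $k$-forcing set of $G$ if the following process colors every vertex of $G$: initially the vertices of $S$ are colored and all others are uncolored; repeatedly, whenever a colored vertex has at most $k$ uncolored neighbors, all of its uncolored neighbors become colored. The $k$-forcing number $F_k(G)$ is the minimum cardinality of a $k$-forcing set of $G$. *)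

(* Defs.v *)
From HB Require Import structures.
From mathcomp Require Import all_boot all_order all_algebra.
Set Implicit Arguments. Unset Strict Implicit. Unset Printing Implicit Defensive.

Section Graph.
Variables (T : finType) (e : rel T).

Definition simple_graph := symmetric e /\ irreflexive e.
Definition connected_graph := forall x y : T, connect e x y.

Definition nbhd (v : T) : {set T} := [set w | e v w].
Definition deg (v : T) : nat := #|nbhd v|.

Definition kforce_step (k : nat) (C : {set T}) : {set T} :=
  C :|: \bigcup_(v in C | #|nbhd v :\: C| <= k) nbhd v.

(* the set colored at the end of the process (the process stabilises
   after at most #|T| rounds) *)
Definition kforce_closure (k : nat) (S : {set T}) : {set T} :=
  iter #|T| (kforce_step k) S.

Definition kforcing_set (k : nat) (S : {set T}) : bool :=
  kforce_closure k S == [set: T].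

(* F_k(G): minimum cardinality of a k-forcing set ([set: T] is always one) *)
Definition kforcing_number (k : nat) : nat :=
  #|[arg min_(S < [set: T] | kforcing_set k S) #|S|]|.
End Graph.

(* Main.v *)
Require Import Defs.
From HB Require Import structures.
From mathcomp Require Import all_boot all_order all_algebra.
From mathcomp Require Import zify ring.
Import Order.TTheory GRing.Theory Num.Theory.
Set Implicit Arguments. Unset Strict Implicit.

Section Closure.
Variables (T : finType) (e : rel T) (k : nat).
Local Notation step := (kforce_step e k).
Local Notation Cl := (kforce_closure e k).

Lemma step_sub (C : {set T}) : C \subset step C.
Proof. exact: subsetUl. Qed.

Lemma step_mono (C D : {set T}) : C \subset D -> step C \subset step D.
Proof.
move=> CD; apply/subsetP => x; rewrite !inE => /orP [xC | /bigcupP [v /andP [vC hv] xv]].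
  by rewrite (subsetP CD).
apply/orP; right; apply/bigcupP; exists v => //.
rewrite (subsetP CD) //=; apply: leq_trans hv; apply: subset_leq_card; exact: setDS.
Qed.

Lemma iter_mono i (C D : {set T}) : C \subset D -> iter i step C \subset iter i step D.
Proof. by move=> CD; elim: i => //= i IH; apply: step_mono. Qed.

Lemma iter_sub i (C : {set T}) : C \subset iter i step C.
Proof. elim: i => //= i IH; exact: subset_trans IH (step_sub _). Qed.

Lemma iter_fix i (C : {set T}) : step C = C -> iter i step C = C.
Proof. by move=> h; elim: i => //= i ->. Qed.

Lemma cl_fix (S : {set T}) : step (Cl S) = Cl S.
Proof.
pose f i := iter i step S.
have H : forall i, (exists2 j, j <= i & step (f j) = f j) \/ i <= #|f i|.
  elim=> [|i [[j ji hj] | hi]]; first by right.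
  - by left; exists j => //; rewrite leqW.
  - have [eqs | neqs] := eqVneq (step (f i)) (f i); first by left; exists i.
    right; have: f i \proper f i.+1.
      by rewrite properEneq eq_sym neqs /= step_sub.
    move/proper_card; exact: leq_ltn_trans.
rewrite /kforce_closure -/(f #|T|).
case: (H #|T|) => [[j jT hj] | hT].
  have ->: f #|T| = f j by rewrite /f -(subnK jT) iterD -/(f j) iter_fix.
  exact: hj.
have -> : f #|T| = [set: T].
  apply/eqP; rewrite eqEcard subsetT /=; by rewrite cardsT.
by apply/eqP; rewrite -subTset step_sub.
Qed.

Lemma iter_le_fix i (S F : {set T}) : S \subset F -> step F = F -> iter i step S \subset F.
Proof. by move=> SF hF; rewrite -(@iter_fix i F hF); apply: iter_mono. Qed.

Lemma cl_least (S F : {set T}) : S \subset F -> step F = F -> Cl S \subset F.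
Proof. exact: iter_le_fix. Qed.

Lemma cl_sub (S : {set T}) : S \subset Cl S.
Proof. exact: iter_sub. Qed.

Lemma cl_mono (S S' : {set T}) : S \subset S' -> Cl S \subset Cl S'.
Proof. exact: iter_mono. Qed.

Lemma cl_absorb (X Y : {set T}) : Cl (Cl X :|: Y) \subset Cl (X :|: Y).
Proof.
apply: cl_least; last exact: cl_fix.
rewrite subUset; apply/andP; split.
  by apply: cl_mono; exact: subsetUl.
exact: subset_trans (subsetUr X Y) (cl_sub _).
Qed.

Lemma cl_nb (S : {set T}) x : x \in Cl S -> x \in S \/ exists2 y, y \in Cl S & e y x.
Proof.
rewrite /kforce_closure.
have : forall i, x \in iter i step S -> x \in S \/ exists2 y, y \in Cl S & e y x.
  elim=> [|i IH] /=; first by left.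
  rewrite inE => /orP [/IH //| /bigcupP [v /andP [vi _] xv]].
  right; exists v; last by move: xv; rewrite inE.
  exact: (subsetP (@iter_le_fix i S (Cl S) (cl_sub S) (cl_fix S)) v vi).
by apply.
Qed.

Lemma closed_nbhd (C : {set T}) u : step C = C -> u \in C -> #|nbhd e u :\: C| <= k ->
  nbhd e u \subset C.
Proof.
move=> hC uC hu; rewrite -hC; apply/subsetP => x xu.
rewrite inE; apply/orP; right; apply/bigcupP; exists u => //; by rewrite uC.
Qed.

Lemma cl_set0 : Cl set0 = set0.
Proof.
apply/eqP; rewrite -subset0; apply: cl_least => //.
apply/eqP; rewrite eqEsubset step_sub andbT.
apply/subsetP => x; rewrite !inE => /orP [//|/bigcupP [v]]; by rewrite inE.
Qed.

End Closure.
Arguments cl_sub {T e k} S.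
Arguments cl_fix {T e k} S.
Arguments cl_absorb {T e k} X Y.
Arguments cl_mono {T e k S S'}.
Arguments cl_set0 {T e k}.
Lemma arA j k d F s a c n : k <= d -> F <= s -> s <= 1 + (d - k) + a ->
  (j + k + 1) * a <= (j + 1) * c -> c + d + 1 <= n ->
  (j + k + 1) * F + k * (j + k.+2) <= (j + 1) * n + k * d + 2 * k.
Proof.
move=> kd Fs sa hac hc.
have h1 : (j + k + 1) * F <= (j + k + 1) * (1 + (d - k) + a) by apply: leq_mul => //; exact: leq_trans sa.
have h2 : (j+1) * c + (j+1)*(d+1) <= (j+1) * n by rewrite -mulnDr leq_mul2l addnA hc orbT.
nia.
Qed.
Lemma arB j k d F s a c n : d < k -> F <= s -> s <= 1 + (d - k) + a ->
  (j + k + 1) * a <= (j + 1) * c -> c + d + 1 <= n ->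
  (j + k + 1) * F + d * (j + 1) <= (j + 1) * n + k.
Proof.
move=> kd Fs sa hac hc.
have h1 : (j + k + 1) * F <= (j + k + 1) * (1 + (d - k) + a) by apply: leq_mul => //; exact: leq_trans sa.
have h2 : (j+1) * c + (j+1)*(d+1) <= (j+1) * n by rewrite -mulnDr leq_mul2l addnA hc orbT.
have e : d - k = 0 by lia.
rewrite e in h1.
nia.
Qed.
Lemma ar1 a b c : a <= b -> c <= b - a -> c + a <= b. Proof. lia. Qed.
Lemma ar2 c r b m k : c + r <= b -> b <= m.+1 -> k < r -> c <= m. Proof. lia. Qed.
Lemma ar3 D k : D - k.+1 = D.-1 - k. Proof. lia. Qed.
Lemma ar4 p q s t w : p <= q -> s <= t -> t + q <= w -> p + s <= w. Proof. lia. Qed.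

Section Greedy.
Variables (T : finType) (e : rel T) (k Delta : nat).
Hypothesis hsym : symmetric e.
Hypothesis hconn : connected_graph e.
Hypothesis hDelta : forall v, deg e v <= Delta.
Local Notation step := (kforce_step e k).
Local Notation Cl := (kforce_closure e k).

Lemma cross (C : {set T}) x y : x \in C -> y \notin C ->
  exists u, exists2 w, u \in C & w \notin C /\ e u w.
Proof.
move=> xC yC; have /connectP [p pp yl] := hconn x y; rewrite yl in yC; clear yl.
elim: p x xC pp yC => [|z p IH] x xC /=; first by move=> _; rewrite xC.
move=> /andP [exz pz] lC.
case zC: (z \in C); first exact: IH pz lC.
by exists x, z; rewrite ?zC.
Qed.

Lemma subset_card (U : {set T}) m : m <= #|U| -> exists2 A : {set T}, A \subset U & #|A| = m.
Proof.
elim: m => [|m IH] hm; first by exists set0; rewrite ?sub0set ?cards0.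
have [A AU cA] := IH (ltnW hm).
have : 0 < #|U :\: A| by rewrite cardsD (setIidPr AU) cA subn_gt0.
rewrite card_gt0 => /set0Pn [x]; rewrite inE => /andP [xA xU].
exists (x |: A); first by rewrite subUset sub1set xU AU.
by rewrite cardsU1 xA cA.
Qed.

Lemma nbr_less u y (C : {set T}) : e u y -> y \in C -> #|nbhd e u :\: C| < deg e u.
Proof.
move=> uy yC; rewrite /deg -(cardsID C (nbhd e u)) -addn1 addnC leq_add2r.
by rewrite card_gt0; apply/set0Pn; exists y; rewrite !inE uy yC.
Qed.

Definition nbinv (C : {set T}) := forall x, x \in C -> exists2 y, y \in C & e x y.

Lemma greedy m : forall C : {set T}, #|~: C| <= m -> step C = C -> C != set0 ->
  nbinv C -> exists2 A : {set T}, Cl (C :|: A) = [set: T] & (Delta.-1) * #|A| <= (Delta - k.+1) * #|~: C|.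
Proof.
elim: m => [|m IH] C hm hC C0 hinv.
  exists set0; last by rewrite cards0 muln0.
  move: hm; rewrite leqn0 => /eqP /cards0_eq h; rewrite -(setCK C) h setC0.
  by rewrite setU0; apply/eqP; rewrite -subTset; exact: cl_sub.
have [CT | CnT] := eqVneq C [set: T].
  exists set0; last by rewrite cards0 muln0.
  by rewrite CT setU0; apply/eqP; rewrite -subTset; exact: cl_sub.
have [x xC] := set0Pn _ C0.
have [y yC] : exists y, y \notin C.
  by apply/existsP; move: CnT; apply: contraR; rewrite negb_exists => /forallP h;
     apply/eqP/setP => z; rewrite inE; have := h z; rewrite negbK.
have [u [w uC [wC uw]]] := cross xC yC.
pose U := nbhd e u :\: C.
have wU : w \in U by rewrite !inE wC uw.
have rk : k < #|U|.
  rewrite ltnNge; apply/negP => hU.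
  by have := subsetP (closed_nbhd hC uC hU) w; rewrite inE uw (negbTE wC) => /(_ isT).
have [y0 y0C uy0] := hinv u uC.
have rD : #|U| <= Delta.-1.
  by have := nbr_less uy0 y0C; have := hDelta u; rewrite /U; lia.
have [A0 A0U cA0] := subset_card (leq_subr k #|U|).
have [C' eC'] := exist (fun X => X = Cl (C :|: A0)) _ erefl.
have CC' : C \subset C' by rewrite eC'; exact: subset_trans (subsetUl C A0) (cl_sub _).
have A0C' : A0 \subset C' by rewrite eC'; exact: subset_trans (subsetUr C A0) (cl_sub _).
have uC' : u \in C' by rewrite (subsetP CC').
have hC' : step C' = C' by rewrite eC'; exact: cl_fix.
have nC' : nbhd e u \subset C'.
  apply: closed_nbhd hC' uC' _.
  have : nbhd e u :\: C' \subset U :\: A0.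
    apply/subsetP => z; rewrite !inE => /andP [zC' zu].
    rewrite zu andbT; apply/andP; split.
      by apply: contra zC' => /(subsetP A0C').
    by apply: contra zC' => /(subsetP CC').
  move/subset_leq_card; rewrite [#|U :\: A0|]cardsD (setIidPr A0U) cA0.
  move=> h; apply: leq_trans h _; rewrite subKn // ltnW //.
have cC' : #|~: C'| + #|U| <= #|~: C|.
  have : ~: C' \subset ~: C :\: U.
    apply/subsetP => z; rewrite inE => zC'; rewrite inE; apply/andP; split.
      apply: contra zC' => zU; apply: (subsetP nC'); move: zU; rewrite inE => /andP [].
      by [].
    by rewrite inE; apply: contra zC' => /(subsetP CC').
  move/subset_leq_card; rewrite cardsD.
  have -> : ~: C :&: U = U.
    by apply/setIidPr/subsetP => z; rewrite !inE => /andP [->].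
  have : #|U| <= #|~: C|.
    by apply: subset_leq_card; apply/subsetP => z; rewrite !inE => /andP [->].
  exact: ar1.
have C'0 : C' != set0.
  by apply/set0Pn; exists x; rewrite (subsetP CC').
have inv' : nbinv C'.
  move=> z zC'; have zC'' : z \in Cl (C :|: A0) by rewrite -eC'.
  have [| [y1 y1C' ey1]] := cl_nb zC''.
    rewrite inE => /orP [zC | zA].
      by have [y1 y1C ey] := hinv z zC; exists y1 => //; rewrite (subsetP CC').
    exists u => //; have := subsetP A0U z zA; rewrite !inE => /andP [_].
    by rewrite hsym.
  by exists y1; rewrite ?eC' // hsym.
have [A1 hA1 cA1] := IH C' (ar2 cC' hm rk) hC' C'0 inv'.
exists (A0 :|: A1).
  apply/eqP; rewrite -subTset -hA1.
  rewrite eC'; apply: subset_trans (cl_absorb _ _) _.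
  by apply: cl_mono; rewrite setUA subxx.
have := leq_card_setU A0 A1; case => h _.
have h1 : Delta.-1 * #|A0| <= (Delta - k.+1) * #|U|.
  rewrite cA0 mulnBr.
  rewrite ar3.
  rewrite mulnBl; apply: leq_sub2l; rewrite [_ * k]mulnC leq_mul2l rD orbT //.
have h2 : (Delta - k.+1) * #|~: C'| + (Delta - k.+1) * #|U| <= (Delta - k.+1) * #|~: C|.
  by rewrite -mulnDr leq_mul2l cC' orbT.
apply: leq_trans (leq_mul (leqnn _) h) _.
rewrite mulnDr; exact: ar4 h1 cA1 h2.
Qed.

End Greedy.

Section Main.
Variables (T : finType) (e : rel T) (k Delta : nat).
Hypothesis hsym : symmetric e.
Hypothesis hconn : connected_graph e.
Hypothesis hDelta : forall v, deg e v <= Delta.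
Local Notation step := (kforce_step e k).
Local Notation Cl := (kforce_closure e k).

Lemma F_spec : exists S : {set T}, [/\ kforcing_set e k S, kforcing_number e k = #|S| &
  forall S', kforcing_set e k S' -> #|S| <= #|S'|].
Proof.
rewrite /kforcing_number.
have PT : kforcing_set e k [set: T] by rewrite /kforcing_set -subTset cl_sub.
case: (arg_minnP (fun S : {set T} => #|S|) PT) => S PS HS.
by exists S; split.
Qed.

Lemma F_le S : kforcing_set e k S -> kforcing_number e k <= #|S|.
Proof. by move=> hS; have [S0 [_ -> H]] := F_spec; exact: H. Qed.

Lemma start (S0 : {set T}) v : v \in S0 -> nbhd e v \subset Cl S0 -> nbhd e v != set0 ->
  (forall x, x \in S0 -> x != v -> e v x) -> nbinv e (Cl S0).
Proof.
move=> vS nv n0 hS z zC; have [zS | [y yC eyz]] := cl_nb zC.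
  case: (eqVneq z v) => [-> | zv].
    have [y yn] := set0Pn _ n0; exists y; first exact: (subsetP nv y yn).
    by move: yn; rewrite inE.
  exists v; first exact: (subsetP (cl_sub S0) v vS).
  by rewrite hsym; exact: hS.
by exists y; rewrite // hsym.
Qed.

Lemma finish (S0 : {set T}) : nbinv e (Cl S0) -> Cl S0 != set0 ->
  exists2 A : {set T}, kforcing_set e k (S0 :|: A) &
    Delta.-1 * #|A| <= (Delta - k.+1) * #|~: Cl S0|.
Proof.
move=> hinv h0.
have [A hA cA] := @greedy T e k Delta hsym hconn hDelta _ _ (leqnn _) (cl_fix S0) h0 hinv.
exists A => //; rewrite /kforcing_set -subTset -hA; exact: cl_absorb.
Qed.

Lemma not_forcing0 : [set: T] != set0 -> ~~ kforcing_set e k set0.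
Proof. by move=> hT; rewrite /kforcing_set cl_set0 eq_sym. Qed.

End Main.

Lemma ar5 D j k : D = j + k.+2 -> D.-1 = j + k + 1 /\ D - k.+1 = j + 1.
Proof. lia. Qed.
Lemma ar6 d k : d - (d - k) <= k. Proof. lia. Qed.
Lemma ar7 k A : 0 < k -> k * A <= 0 * A -> A = 0. Proof. nia. Qed.
Section RatSec.
Local Open Scope ring_scope.

Lemma ratA (j k d F n : nat) :
  ((j + k + 1) * F + k * (j + k.+2) <= (j + 1) * n + k * d + 2 * k)%N ->
  (F%:R : rat) <= (((j + k.+2)%:R - k%:R - 1) * n%:R
     + Num.max (d%:R * (k%:R + 1 - (j + k.+2)%:R) + k%:R)
               (k%:R * (d%:R - (j + k.+2)%:R + 2))) / ((j + k.+2)%:R - 1).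
Proof.
move=> H.
have E0 : ((j + k.+2)%:R - 1 : rat) = (j + k + 1)%:R.
  by rewrite -[k.+2]addn2 !natrD; ring.
rewrite E0 ler_pdivlMr ?ltr0n ?addn1 //.
apply: le_trans (_ : _ <= ((j + k.+2)%:R - k%:R - 1) * n%:R + (k%:R * (d%:R - (j + k.+2)%:R + 2))) _; last first.
  by rewrite lerD2l le_max lexx orbT.
have E : ((j + k.+2)%:R - k%:R - 1) * n%:R + (k%:R * (d%:R - (j + k.+2)%:R + 2))
   = ((j+1)*n + k*d + 2*k)%:R - (k * (j + k.+2))%:R :> rat.
  by rewrite -[k.+2]addn2 !natrD !natrM !natrD; ring.
rewrite E lerBrDr -natrM -natrD ler_nat mulnC -addn1; exact: H.
Qed.

Lemma ratB (j k d F n : nat) :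
  ((j + k + 1) * F + d * (j + 1) <= (j + 1) * n + k)%N ->
  (F%:R : rat) <= (((j + k.+2)%:R - k%:R - 1) * n%:R
     + Num.max (d%:R * (k%:R + 1 - (j + k.+2)%:R) + k%:R)
               (k%:R * (d%:R - (j + k.+2)%:R + 2))) / ((j + k.+2)%:R - 1).
Proof.
move=> H.
have E0 : ((j + k.+2)%:R - 1 : rat) = (j + k + 1)%:R.
  by rewrite -[k.+2]addn2 !natrD; ring.
rewrite E0 ler_pdivlMr ?ltr0n ?addn1 //.
apply: le_trans (_ : _ <= ((j + k.+2)%:R - k%:R - 1) * n%:R + (d%:R * (k%:R + 1 - (j + k.+2)%:R) + k%:R)) _; last first.
  by rewrite lerD2l le_max lexx.
have E : ((j + k.+2)%:R - k%:R - 1) * n%:R + (d%:R * (k%:R + 1 - (j + k.+2)%:R) + k%:R)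
   = ((j+1)*n + k)%:R - (d * (j + 1))%:R :> rat.
  by rewrite -[k.+2]addn2 !natrD !natrM !natrD; ring.
rewrite E lerBrDr -natrM -natrD ler_nat mulnC -addn1; exact: H.
Qed.
End RatSec.

Unset Implicit Arguments.
Lemma ar8 d c0 c n : (true + d <= c0)%N -> (c0 + c = n)%N -> (c + d + 1 <= n)%N.
Proof. move=> /= h1 h2; lia. Qed.

Theorem theorem1 (T : finType) (e : rel T) (k delta Delta : nat)
  (Hsimple : simple_graph e) (Hconn : connected_graph e)
  (Hk : 0 < k)
  (Hmin : forall v : T, delta <= deg e v) (Hmin' : exists v : T, deg e v = delta)
  (HMax : forall v : T, deg e v <= Delta) (HMax' : exists v : T, deg e v = Delta)
  (HDelta : k.+1 <= Delta) :
  [/\ (delta < Delta -> Delta = k.+1 -> kforcing_number e k = 1),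
      (delta = Delta -> Delta = k.+1 -> kforcing_number e k = 2) &
      (k.+2 <= Delta ->
        (((kforcing_number e k)%:R : rat) <=
          ((Delta%:R - k%:R - 1) * #|T|%:R
             + Num.max (delta%:R * (k%:R + 1 - Delta%:R) + k%:R)
                       (k%:R * (delta%:R - Delta%:R + 2)))
          / (Delta%:R - 1))%R)].
Proof.
have [hsym hirr] := Hsimple.
have [v0 dv0] := HMax'.
have vnv : forall v, v \notin nbhd e v by move=> v; rewrite inE hirr.
have [w0 w0n] : exists w0, w0 \in nbhd e v0.
  apply/set0Pn; rewrite -card_gt0 -/(deg e v0) dv0; exact: leq_trans (ltn0Sn k) HDelta.
have w0v0 : w0 != v0 by apply: contraTneq w0n => ->; exact: vnv.
have nbne : forall v, nbhd e v != set0.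
  move=> v.
  have [w wv] : exists w, w != v.
    case: (eqVneq w0 v) => [<- | h]; last by exists w0.
    by exists v0; rewrite eq_sym.
  have vC : v \in [set v] by rewrite set11.
  have wC : w \notin [set v] by rewrite inE.
  have [u [w' uC [w'C uw]]] := cross Hconn vC wC.
  move: uC; rewrite inE => /eqP ?; subst u.
  by apply/set0Pn; exists w'; rewrite inE.
have hT : [set: T] != set0 by apply/set0Pn; exists v0.
have [Sm [Sf FS Smin]] := F_spec e k.
have Sm0 : Sm != set0.
  by apply: contraTneq Sf => ->; exact: not_forcing0 e k hT.
split.
- move=> hlt hDk.
  have [v dv] := Hmin'.
  set C0 := kforce_closure e k [set v].
  have vC : v \in C0 := subsetP (cl_sub _) v (set11 v).
  have nv : nbhd e v \subset C0.
    apply: closed_nbhd (cl_fix _) vC _.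
    apply: leq_trans (subset_leq_card (subsetDl _ _)) _.
    by rewrite -/(deg e v) dv -ltnS -hDk.
  have inv := start hsym (set11 v) nv (nbne v)
    (fun x => ltac:(by rewrite inE => /eqP ->; rewrite eqxx)).
  have h0 : C0 != set0 by apply/set0Pn; exists v.
  have [A fA cA] := finish hsym Hconn HMax inv h0.
  rewrite hDk /= subnn mul0n leqn0 muln_eq0 in cA.
  have A0 : A = set0.
    case/orP: cA => [/eqP k0 | /eqP /cards0_eq //]; by rewrite k0 in Hk.
  rewrite A0 setU0 in fA.
  apply/eqP; rewrite eqn_leq; apply/andP; split.
    by have := F_le fA; rewrite cards1.
  by rewrite FS card_gt0.
- move=> hdD hDk.
  have degk : forall x, #|nbhd e x| = k.+1.
    move=> x; have h1 := Hmin x; have h2 := HMax x; rewrite hdD hDk in h1 h2.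
    by apply/eqP; rewrite eqn_leq h1 h2.
  set C0 := kforce_closure e k [set v0; w0].
  have S0C : [set v0; w0] \subset C0 := cl_sub _.
  have vC : v0 \in C0 := subsetP S0C v0 (set21 v0 w0).
  have nv : nbhd e v0 \subset C0.
    apply: closed_nbhd (cl_fix _) vC _.
    have wsub : [set w0] \subset C0 by rewrite sub1set (subsetP S0C w0 (set22 v0 w0)).
    apply: leq_trans (subset_leq_card (setDS _ wsub)) _.
    have e1 := cardsD1 w0 (nbhd e v0).
    rewrite w0n degk /= in e1; case: e1; rewrite add0n => <-; exact: leqnn.
  have inv := start hsym (set21 v0 w0) nv (nbne v0)
    (fun x => ltac:(rewrite !inE => /orP [/eqP -> | /eqP ->]; [by rewrite eqxx | by move: w0n; rewrite inE])).
  have h0 : C0 != set0 by apply/set0Pn; exists v0.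
  have [A fA cA] := finish hsym Hconn HMax inv h0.
  rewrite hDk /= subnn mul0n leqn0 muln_eq0 in cA.
  have A0 : A = set0.
    case/orP: cA => [/eqP k0 | /eqP /cards0_eq //]; by rewrite k0 in Hk.
  rewrite A0 setU0 in fA.
  apply/eqP; rewrite eqn_leq; apply/andP; split.
    by have := F_le fA; rewrite cards2 => /leq_trans; apply; rewrite ltnS leq_b1.
  rewrite FS ltnNge; apply/negP => hS1.
  have [x Sx] : exists x, Sm = [set x].
    by apply/cards1P; rewrite eqn_leq hS1 card_gt0 Sm0.
  have fix1 : kforce_step e k [set x] = [set x].
    apply/eqP; rewrite eqEsubset step_sub andbT; apply/subsetP => z.
    rewrite /kforce_step in_setU => /orP [//| /bigcupP [y /andP [yx hy] _]].
    move: yx hy; rewrite inE => /eqP ->.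
    have E := cardsD1 x (nbhd e x).
    rewrite (negbTE (vnv x)) add0n degk in E.
    by rewrite -E ltnn.
  have := cl_least (subxx [set x]) fix1.
  move: Sf; rewrite /kforcing_set Sx => /eqP -> /subsetP h.
  have := h v0 (in_setT _); have := h w0 (in_setT _); rewrite !inE => /eqP e1 /eqP e2.
  by move: w0v0; rewrite e1 e2 eqxx.
- move=> hD2.
  have [v dv] := Hmin'.
  have [A0 A0n cA0] := subset_card (leq_subr k #|nbhd e v|).
  set S0 := v |: A0.
  set C0 := kforce_closure e k S0.
  have S0C : S0 \subset C0 := cl_sub _.
  have vC : v \in C0 := subsetP S0C v (setU11 v A0).
  have nv : nbhd e v \subset C0.
    apply: closed_nbhd (cl_fix _) vC _.
    apply: leq_trans (subset_leq_card (setDS _ (subset_trans (subsetUr [set v] A0) S0C))) _.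
    by rewrite cardsD (setIidPr A0n) cA0 ar6.
  have inv := start hsym (setU11 v A0) nv (nbne v)
    (fun x => ltac:(rewrite !inE => /orP [/eqP -> | xA]; [by rewrite eqxx | move=> _; by have := subsetP A0n x xA; rewrite inE])).
  have h0 : C0 != set0 by apply/set0Pn; exists v.
  have [A fA cA] := finish hsym Hconn HMax inv h0.
  have hF := F_le fA.
  have hS : #|S0 :|: A| <= 1 + (#|nbhd e v| - k) + #|A|.
    apply: leq_trans (leq_card_setU S0 A).1 _.
    by rewrite leq_add2r -cA0 cardsU1 leq_add2r leq_b1.
  have hc : #|~: C0| + #|nbhd e v| + 1 <= #|T|.
    have h1 : #|v |: nbhd e v| <= #|C0|.
      by apply: subset_leq_card; rewrite subUset sub1set vC nv.
    rewrite cardsU1 vnv in h1.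
    exact: ar8 h1 (cardsC C0).
  have [j hj] : exists j, Delta = j + k.+2 by exists (Delta - k.+2); rewrite subnK.
  have [e1 e2] := ar5 hj. rewrite e1 e2 in cA.
  rewrite hj -dv.
  case: (leqP k (deg e v)) => hkd.
    by apply: ratA; exact: (arA hkd hF hS cA hc).
  by apply: ratB; exact: (arB hkd hF hS cA hc).
Qed.
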